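(* Let $\mathcal{G}$ be an MVPP always-grabbing pawn game with pawns $[d]$, let $\langle v,P\rangle$ be a configuration, let $j\in[d]$ be the pawn with $v\in V_j$, and let $P'\subseteq P$. (1) If ($j\in P$ implies $j\in P'$) and Player 1 wins from $\langle v,P\rangle$, then Player 1 wins from $\langle v,P'\rangle$. (2) If ($j\notin P'$ implies $j\notin P$) and Player 2 wins from $\langle v,P'\rangle$, then Player 2 wins from $\langle v,P\rangle$.
   Context: A pawn game with $d$ pawns consists of a finite directed graph $(V,E)$, a target set $T\subseteq V$, and sets $V_1,\dots,V_d$ partitioning $V$ (MVPP), where Pawn $j$ owns the vertices in $V_j$. A configuration $\langle v,P\rangle$ gives the token position and the set $P\subseteq[d]$ of pawns controlled by Player 1 (Player 2 controls the rest). At $\langle v,P\rangle$, Player 1 moves the token along an edge iff he controls the pawn owning $v$; otherwise Player 2 moves. Under always grabbing, after every move of Player $i$, the other player must take exactly one pawn currently controlled by Player $i$. Player 1 wins a play iff it visits $T$, otherwise Player 2 wins; winning from a configuration means having a strategy that wins against all opponent strategies. *)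

(* Defs.v *)
From mathcomp Require Import all_boot.
Set Implicit Arguments. Unset Strict Implicit. Unset Printing Implicit Defensive.

Section PawnGame.
(* d pawns 'I_d; finite directed graph (V, E); target T;
   own v = the pawn j with v \in V_j (so V_1..V_d partition V). *)
Variables (d : nat) (V : finType) (E : rel V) (T : {set V}) (own : V -> 'I_d).

(* configuration <v, P>: token position, set of pawns controlled by Player 1 *)
Definition Conf := (V * {set 'I_d})%type.

(* Player 1 is [true], Player 2 is [false].  A player controls the move at
   <v,P> iff (own v \in P) == player. *)

(* A (history-dependent) strategy: a move choice for when the player moves,
   and a grab choice for when the opponent has just moved to vertex u.
   The history argument is the list of previous configurations. *)
Record strategy := Strategy {
  smove : seq Conf -> Conf -> V;
  sgrab : seq Conf -> Conf -> V -> 'I_d }.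

Definition legal (pl : bool) (s : strategy) : Prop :=
  forall (h : seq Conf) (v : V) (P : {set 'I_d}),
    ((own v \in P) = pl -> E v (smove s h (v, P))) /\
    ((own v \in P) = ~~ pl -> forall u, (sgrab s h (v, P) u \in P) = ~~ pl).

(* one round: the controller moves the token, then the other player takes
   exactly one pawn from the mover (always grabbing). *)
Definition step (s1 s2 : strategy) (h : seq Conf) (c : Conf) : Conf :=
  let: (v, P) := c in
  if own v \in P then
    let u := smove s1 h c in (u, P :\ sgrab s2 h c u)
  else
    let u := smove s2 h c in (u, P :|: [set sgrab s1 h c u]).

(* run n = (history before the n-th configuration, n-th configuration) *)
Fixpoint run (s1 s2 : strategy) (c0 : Conf) (n : nat) : seq Conf * Conf :=
  match n with
  | 0 => ([::], c0)
  | n'.+1 => let: (h, c) := run s1 s2 c0 n' in (rcons h c, step s1 s2 h c)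
  end.

Definition visits_T (s1 s2 : strategy) (c0 : Conf) : Prop :=
  exists n, ((run s1 s2 c0 n).2).1 \in T.

Definition wins1 (v : V) (P : {set 'I_d}) : Prop :=
  exists s1, legal true s1 /\
    forall s2, legal false s2 -> visits_T s1 s2 (v, P).

Definition wins2 (v : V) (P : {set 'I_d}) : Prop :=
  exists s2, legal false s2 /\
    forall s1, legal true s1 -> ~ visits_T s1 s2 (v, P).

End PawnGame.

(* Main.v *)
Require Import Defs.
From mathcomp Require Import all_boot.
Set Implicit Arguments. Unset Strict Implicit. Unset Printing Implicit Defensive.

Section Common.
Variables (d : nat) (V : finType) (E : rel V) (own : V -> 'I_d).
Hypothesis no_dead_end : forall x : V, exists y : V, E x y.

Definition dflt (x : V) : V := odflt x [pick y | E x y].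
Lemma dfltP x : E x (dflt x).
Proof.
rewrite /dflt; case: pickP => //= H; have [y Hy] := no_dead_end x.
by rewrite H in Hy.
Qed.

Lemma run_S s1 s2 c0 n : run own s1 s2 c0 n.+1 =
  (rcons (run own s1 s2 c0 n).1 (run own s1 s2 c0 n).2,
   step own s1 s2 (run own s1 s2 c0 n).1 (run own s1 s2 c0 n).2).
Proof. by rewrite /=; case: (run own s1 s2 c0 n). Qed.

Lemma size_run s1 s2 c0 n : size (run own s1 s2 c0 n).1 = n.
Proof. by elim: n => [|n IH] //; rewrite run_S /= size_rcons IH. Qed.

Lemma setD_D1 (A B : {set 'I_d}) g : g \in B -> A :\: (B :\: (B :\ g)) = A :\ g.
Proof.
move=> gB; apply/setP => y; rewrite !inE.
case: (y =P g) => [->|_]; rewrite ?gB /=; by case: (_ \in A); case: (_ \in B).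
Qed.

Lemma setU_D (A B : {set 'I_d}) g : g \notin A -> B :|: ((A :|: [set g]) :\: A) = B :|: [set g].
Proof.
move=> gA; apply/setP => y; rewrite !inE.
case: (y =P g) => [->|_]; rewrite ?(negbTE gA) /=; by case: (_ \in A); case: (_ \in B).
Qed.

End Common.

Section Part1.
Variables (d : nat) (V : finType) (E : rel V) (T : {set V}) (own : V -> 'I_d).
Hypothesis no_dead_end : forall x : V, exists y : V, E x y.
Variables (v : V) (P P' : {set 'I_d}).
Hypothesis HP'P : P' \subset P.
Hypothesis Hv : (own v \in P) = (own v \in P').
Variable s1 : strategy d V.
Hypothesis Hl1 : legal E own true s1.

Definition upd1 (sh : seq (Conf d V)) (sc c0 c1 : Conf d V) : Conf d V :=
  let: (w, A) := sc in let: (_, B) := c0 in let: (u, B1) := c1 in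
  (u, if own w \in B then
        (if own u \in A :\: B then A :\ own u else A :\: (B :\: B1))
      else A :|: [set sgrab s1 sh (w, A) u]).

Fixpoint simr1 (r : seq (Conf d V)) : seq (Conf d V) * Conf d V :=
  match r with
  | c1 :: ((c0 :: _) as r') =>
      let: (sh, sc) := simr1 r' in (rcons sh sc, upd1 sh sc c0 c1)
  | _ => ([::], (v, P))
  end.

Definition sim1 h (c : Conf d V) := simr1 (c :: rev h).

Lemma sim1_0 c : sim1 [::] c = ([::], (v, P)).
Proof. by []. Qed.

Lemma sim1_S h c c1 : sim1 (rcons h c) c1 =
  (rcons (sim1 h c).1 (sim1 h c).2, upd1 (sim1 h c).1 (sim1 h c).2 c c1).
Proof.
rewrite /sim1 rev_rcons.
change (simr1 (c1 :: c :: rev h)) with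
  (let: (sh, sc) := simr1 (c :: rev h) in (rcons sh sc, upd1 sh sc c c1)).
by case: (simr1 (c :: rev h)).
Qed.

Definition s1' : strategy d V :=
  Strategy (fun h c => let x := smove s1 (sim1 h c).1 (sim1 h c).2 in
                       if E c.1 x then x else dflt E c.1)
           (fun h c u => let g := sgrab s1 (sim1 h c).1 (sim1 h c).2 u in
              let g' := if own u \in (sim1 h c).2.2 :\: c.2 then own u else g in
              if g' \notin c.2 then g' else own c.1).

Lemma legal_s1' : legal E own true s1'.
Proof.
move=> h w B; split => /= [_|Hw u].
  by case: ifP => // _; apply: dfltP.
by case: ifP => [/negbTE|_] //; rewrite Hw.
Qed.

Variable s2' : strategy d V.
Hypothesis Hl2' : legal E own false s2'.

Definition R n := run own s1' s2' (v, P') n.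

Definition s2 : strategy d V :=
  Strategy (fun sh c => let x := smove s2' (R (size sh)).1 (R (size sh)).2 in
                       if E c.1 x then x else dflt E c.1)
           (fun sh c u => let g' := sgrab s2' (R (size sh)).1 (R (size sh)).2 u in
              let g := if own u \in c.2 :\: (R (size sh)).2.2 then own u else g' in
              if g \in c.2 then g else own c.1).

Lemma legal_s2 : legal E own false s2.
Proof.
move=> h w A; split => /= [_|Hw u].
  by case: ifP => // _; apply: dfltP.
by case: ifP => // _; rewrite Hw.
Qed.

Lemma inv1 n :
  let: (h', c') := R n in let: (sh, c) := run own s1 s2 (v, P) n in
  sim1 h' c' = (sh, c) /\ c.1 = c'.1 /\ c'.2 \subset c.2 /\
  (own c.1 \in c.2) = (own c.1 \in c'.2).
Proof.
elim: n => [|n IH]; first by rewrite /= Hv.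
have Hs := size_run own s1 s2 (v, P) n.
rewrite /R run_S -/(R n) run_S.
move: IH Hs; case En: (R n) => [h' [w B]].
case: (run own s1 s2 (v, P) n) => sh [w0 A] /= [Hsim [Hw [Hsub Hown]]] Hs; subst w0.
rewrite /step /= sim1_S Hsim Hs En /=.
case: ifP => HwB; rewrite Hown HwB /=.
  have HwA : own w \in A by rewrite Hown.
  have Hx := (Hl1 sh w A).1 HwA; rewrite Hx.
  set x := smove s1 sh (w, A).
  have Hg' := (Hl2' h' w B).2 HwB x.
  set g' := sgrab s2' h' (w, B) x in Hg' *.
  case Hd: (own x \in A :\: B).
    move: (Hd); rewrite inE => /andP [HxB HxA]; rewrite HxA.
    split=> //; split=> //; split.
      apply/subsetP => y; rewrite !inE => /andP [_ yB].
      apply/andP; split; last exact: (subsetP Hsub).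
      by apply: contraNneq HxB => <-.
    by rewrite !inE eqxx (negbTE HxB) /= andbF.
  rewrite (subsetP Hsub _ Hg') setD_D1 //.
  split=> //; split=> //; split; first exact: setSD.
  move: Hd; rewrite !inE.
  case HB: (own x \in B); first by rewrite (subsetP Hsub _ HB).
  by case: (own x \in A).
have HwA : (own w \in A) = false by rewrite Hown.
have Hx := (Hl2' h' w B).1 HwB; rewrite Hx.
set x := smove s2' h' (w, B).
have Hg := (Hl1 sh w A).2 HwA x.
set g := sgrab s1 sh (w, A) x in Hg *.
split=> //; split=> //.
case Hd: (own x \in A :\: B).
  move: (Hd); rewrite inE => /andP [HxB HxA]; rewrite HxB.
  split; last by rewrite !inE eqxx HxA orbT.
  apply/subsetP => y; rewrite !inE => /orP [yB|yx].
    by rewrite (subsetP Hsub _ yB).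
  by rewrite (eqP yx) HxA.
have HgB : g \notin B by apply: contraFN Hg; exact: (subsetP Hsub).
rewrite HgB; split; first exact: setSU.
move: Hd; rewrite !inE.
case HB: (own x \in B); first by rewrite (subsetP Hsub _ HB).
by case: (own x \in A).
Qed.

End Part1.

Lemma part1 (d : nat) (V : finType) (E : rel V) (T : {set V}) (own : V -> 'I_d)
  (nde : forall x : V, exists y : V, E x y) (v : V) (P P' : {set 'I_d})
  (HP'P : P' \subset P) (Hv : (own v \in P) = (own v \in P')) :
  wins1 E T own v P -> wins1 E T own v P'.
Proof.
case=> s1 [Hl1 Hw1]; exists (s1' E own v P s1); split; first exact: legal_s1'.
move=> s2' Hl2'; have [n Hn] := Hw1 _ (legal_s2 own nde v P P' s1 s2').
exists n; have := inv1 HP'P Hv Hl1 Hl2' n; rewrite /R; move: Hn.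
case: (run own s1 _ _ n) => sh c.
case: (run own _ s2' _ n) => h' c' /= Hn [_ [Hc _]].
by rewrite -Hc.
Qed.

Section Part2.
Variables (d : nat) (V : finType) (E : rel V) (T : {set V}) (own : V -> 'I_d).
Hypothesis no_dead_end : forall x : V, exists y : V, E x y.
Variables (v : V) (P P' : {set 'I_d}).
Hypothesis HP'P : P' \subset P.
Hypothesis Hv : (own v \in P) = (own v \in P').
Variable s2' : strategy d V.
Hypothesis Hl2' : legal E own false s2'.

Definition upd2 (sh : seq (Conf d V)) (sc c0 c1 : Conf d V) : Conf d V :=
  let: (w, B) := sc in let: (_, A) := c0 in let: (u, A1) := c1 in
  (u, if own w \in A then B :\ sgrab s2' sh (w, B) u
      else if own u \in A :\: B then B :|: [set own u] else B :|: (A1 :\: A)).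

Fixpoint simr2 (r : seq (Conf d V)) : seq (Conf d V) * Conf d V :=
  match r with
  | c1 :: ((c0 :: _) as r') =>
      let: (sh, sc) := simr2 r' in (rcons sh sc, upd2 sh sc c0 c1)
  | _ => ([::], (v, P'))
  end.

Definition sim2 h (c : Conf d V) := simr2 (c :: rev h).

Lemma sim2_S h c c1 : sim2 (rcons h c) c1 =
  (rcons (sim2 h c).1 (sim2 h c).2, upd2 (sim2 h c).1 (sim2 h c).2 c c1).
Proof.
rewrite /sim2 rev_rcons.
change (simr2 (c1 :: c :: rev h)) with
  (let: (sh, sc) := simr2 (c :: rev h) in (rcons sh sc, upd2 sh sc c c1)).
by case: (simr2 (c :: rev h)).
Qed.

Definition s2r : strategy d V :=
  Strategy (fun h c => let x := smove s2' (sim2 h c).1 (sim2 h c).2 in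
                       if E c.1 x then x else dflt E c.1)
           (fun h c u => let g' := sgrab s2' (sim2 h c).1 (sim2 h c).2 u in
              let g := if own u \in c.2 :\: (sim2 h c).2.2 then own u else g' in
              if g \in c.2 then g else own c.1).

Lemma legal_s2r : legal E own false s2r.
Proof.
move=> h w A; split => /= [_|Hw u].
  by case: ifP => // _; apply: dfltP.
by case: ifP => // _; rewrite Hw.
Qed.

Variable s1 : strategy d V.
Hypothesis Hl1 : legal E own true s1.

Definition R2 n := run own s1 s2r (v, P) n.

Definition s1s : strategy d V :=
  Strategy (fun sh c => let x := smove s1 (R2 (size sh)).1 (R2 (size sh)).2 in
                       if E c.1 x then x else dflt E c.1)
           (fun sh c u => let g := sgrab s1 (R2 (size sh)).1 (R2 (size sh)).2 u in
              let g' := if own u \in (R2 (size sh)).2.2 :\: c.2 then own u else g in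
              if g' \notin c.2 then g' else own c.1).

Lemma legal_s1s : legal E own true s1s.
Proof.
move=> h w B; split => /= [_|Hw u].
  by case: ifP => // _; apply: dfltP.
by case: ifP => [/negbTE|_] //; rewrite Hw.
Qed.

Lemma inv2 n :
  let: (h, c) := R2 n in let: (sh', c') := run own s1s s2' (v, P') n in
  sim2 h c = (sh', c') /\ c'.1 = c.1 /\ c'.2 \subset c.2 /\
  (own c.1 \in c.2) = (own c.1 \in c'.2).
Proof.
elim: n => [|n IH]; first by rewrite /= Hv.
have Hs := size_run own s1s s2' (v, P') n.
rewrite /R2 run_S -/(R2 n) run_S.
move: IH Hs; case En: (R2 n) => [h [w A]].
case: (run own s1s s2' (v, P') n) => sh [w0 B] /= [Hsim [Hw [Hsub Hown]]] Hs.
subst w0.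
rewrite /step /= sim2_S Hsim Hs En /=.
case: ifP => HwA; rewrite -Hown HwA /=.
  have HwB : own w \in B by rewrite -Hown.
  have Hx := (Hl1 h w A).1 HwA; rewrite Hx.
  set x := smove s1 h (w, A).
  have Hg' := (Hl2' sh w B).2 HwB x.
  set g' := sgrab s2' sh (w, B) x in Hg' *.
  split=> //; split=> //.
  case Hd: (own x \in A :\: B).
    move: (Hd); rewrite inE => /andP [HxB HxA]; rewrite HxA.
    split.
      apply/subsetP => y; rewrite !inE => /andP [_ yB].
      apply/andP; split; last exact: (subsetP Hsub).
      by apply: contraNneq HxB => <-.
    by rewrite !inE eqxx (negbTE HxB) /= andbF.
  rewrite (subsetP Hsub _ Hg').
  split; first exact: setSD.
  move: Hd; rewrite !inE.
  case HB: (own x \in B); first by rewrite (subsetP Hsub _ HB).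
  by case: (own x \in A).
have HwB : (own w \in B) = false by rewrite -Hown.
have Hx := (Hl2' sh w B).1 HwB; rewrite Hx.
set x := smove s2' sh (w, B).
have Hg := (Hl1 h w A).2 HwA x.
set g := sgrab s1 h (w, A) x in Hg *.
case Hd: (own x \in A :\: B).
  move: (Hd); rewrite inE => /andP [HxB HxA]; rewrite HxB.
  split=> //; split=> //.
  split; last by rewrite !inE eqxx HxA orbT.
  apply/subsetP => y; rewrite !inE => /orP [yB|yx].
    by rewrite (subsetP Hsub _ yB).
  by rewrite (eqP yx) HxA.
have HgB : g \notin B by apply: contraFN Hg; exact: (subsetP Hsub).
rewrite HgB setU_D; last by rewrite Hg.
split=> //; split=> //; split; first exact: setSU.
move: Hd; rewrite !inE.
case HB: (own x \in B); first by rewrite (subsetP Hsub _ HB).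
by case: (own x \in A).
Qed.

End Part2.

Lemma part2 (d : nat) (V : finType) (E : rel V) (T : {set V}) (own : V -> 'I_d)
  (nde : forall x : V, exists y : V, E x y) (v : V) (P P' : {set 'I_d})
  (HP'P : P' \subset P) (Hv : (own v \in P) = (own v \in P')) :
  wins2 E T own v P' -> wins2 E T own v P.
Proof.
case=> s2' [Hl2' Hw2]; exists (s2r E own v P' s2'); split; first exact: legal_s2r.
move=> s1 Hl1 [n Hn].
apply: (Hw2 _ (legal_s1s own nde v P P' s2' s1)); exists n.
have := inv2 HP'P Hv Hl2' Hl1 n; rewrite /R2; move: Hn.
case: (run own s1 _ _ n) => h c.
case: (run own _ s2' _ n) => sh c' /= Hn [_ [Hc _]].
by rewrite Hc.
Qed.

Theorem theorem26 (d : nat) (V : finType) (E : rel V) (T : {set V})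
  (own : V -> 'I_d)
  (no_dead_end : forall x : V, exists y : V, E x y)
  (v : V) (P P' : {set 'I_d}) (HP'P : P' \subset P) :
  ((own v \in P -> own v \in P') ->
     wins1 E T own v P -> wins1 E T own v P') /\
  ((own v \notin P' -> own v \notin P) ->
     wins2 E T own v P' -> wins2 E T own v P).
Proof.
have Hsub := subsetP HP'P.
split=> [H|H].
  apply: part1 => //; apply/idP/idP => [/H //|]; exact: Hsub.
apply: part2 => //; apply/idP/idP => [|]; last exact: Hsub.
by move=> HP; case: (boolP (own v \in P')) => // /H; rewrite HP.
Qed.
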